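(* Let $\lambda\in B^{(k,r)}$ and let $\lambda'$ be an enlargement of $\lambda$. Then $\lambda'$ is intertwined with $\lambda$.
   Context: Let $P=\mathbb Z^n$. For $\lambda\in P$, $\rho(\lambda)$ is the unique permutation of $(\frac{n-1}2,\dots,-\frac{n-1}2)$ with $\rho(\lambda)_i>\rho(\lambda)_j$ iff $\lambda_i>\lambda_j$ or ($\lambda_i=\lambda_j$, $i<j$); let $(i_1,\dots,i_n)$ be the indices with $\rho(\lambda)_{i_a}=\frac{n+1}2-a$. $\omega\lambda=(\lambda_2,\dots,\lambda_n,\lambda_1+1)$; $s_i\lambda$ swaps $\lambda_i,\lambda_{i+1}$. Fix $1\le k\le n-1$, $r\ge2$, $g=\gcd(k+1,r-1)$, $\tau=e^{2\pi\sqrt{-1}/(r-1)}$, specialization $(\ast)$: $t=u^{(r-1)/g}$, $q=\tau u^{-(k+1)/g}$. $u_\lambda(f)=f(t^{-\rho(\lambda)_1}q^{-\lambda_1},\dots,t^{-\rho(\lambda)_n}q^{-\lambda_n})$. ''Intertwined'' is the equivalence relation on $P$ generated by $\lambda\sim\omega\lambda$ and by $\lambda\sim s_i\lambda$ whenever $s_i\lambda\ne\lambda$ and, at $(\ast)$, $u_\lambda(x_i/x_{i+1})\notin\{1,t,t^{-1}\}$. For $a\ge2,b\ge1$, $(i,j)$ is a neighborhood of type $(a,b)$ in $\lambda$ if $\rho(\lambda)_i-\rho(\lambda)_j=a-1$ and either $\lambda_i-\lambda_j\le b-1$, or $\lambda_i-\lambda_j=b$ and $j<i$. $B^{(k,r)}$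 is the set of $\lambda\in P$ having no neighborhood of type $(k+1,r-1)$. An enlargement of $\lambda$ is $\lambda'\in P$ with $\rho(\lambda')=\rho(\lambda)$ and $\lambda'_{i_a}-\lambda'_{i_{a+1}}>\max\{[\frac n{k+1}](r-1),\lambda_{i_a}-\lambda_{i_{a+1}}\}$ for all $1\le a\le n-1$. *)

(* Defs.v *)
From HB Require Import structures.
From mathcomp Require Import all_boot all_order all_algebra.
From Stdlib Require Import Relations.Relation_Definitions Relations.Relation_Operators.
Set Implicit Arguments. Unset Strict Implicit. Unset Printing Implicit Defensive.
Import Order.TTheory GRing.Theory Num.Theory.
Local Open Scope ring_scope.

(* Weights: P = Z^n, coordinates indexed 0..n-1 (paper: 1..n). *)
Definition wt (n : nat) := {ffun 'I_n -> int}.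

(* coordinate at a natural index (0 outside the range; only used in range) *)
Definition at_ (n : nat) (l : wt n) (j : nat) : int :=
  if insub j is Some i then l i else 0.

Definition pos (n : nat) (l : wt n) (i : 'I_n) : nat :=
  #|[set j : 'I_n | (l i < l j) || ((l j == l i) && (j < i)%N)]|.

(* rho(l)_i: the unique permutation of ((n-1)/2, ..., -(n-1)/2) with
   rho_i > rho_j iff l_i > l_j or (l_i = l_j and i < j);
   the index of rank a (1-based) gets (n+1)/2 - a. *)
Definition rho (n : nat) (l : wt n) (i : 'I_n) : rat :=
  ((n%:R - 1) / 2%:R) - (pos l i)%:R.

Definition omega (n : nat) (l : wt n) : wt n :=
  [ffun j : 'I_n => if (j.+1 < n)%N then at_ l j.+1 else at_ l 0 + 1].

(* s_i l swaps l_i and l_{i+1}  (here i is 0-based, i+1 < n) *)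
Definition sw (n : nat) (i : nat) (l : wt n) : wt n :=
  [ffun j : 'I_n => if val j == i then at_ l i.+1
                    else if val j == i.+1 then at_ l i else l j].

(* Specialization (ast): t = u^{(r-1)/g}, q = tau u^{-(k+1)/g}, with u a formal
   variable and tau = exp(2 pi i/(r-1)).  The values u_l(x_i/x_{i+1}) are
   monomials tau^m u^e (m : int, e : rat); since tau is a primitive
   (r-1)-th root of unity and u is transcendental, tau^m u^e = tau^m' u^e'
   iff m = m' mod (r-1) and e = e'. *)
Definition mon := (int * rat)%type.
Definition mon_mul (a b : mon) : mon := (a.1 + b.1, a.2 + b.2).
Definition mon_inv (a : mon) : mon := (- a.1, - a.2).
Definition mon_eq (r : nat) (a b : mon) : bool :=
  ((a.1 - b.1) %% (r.-1)%:Z == 0)%Z && (a.2 == b.2).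
Definition gk (k r : nat) : nat := gcdn k.+1 r.-1.
Definition t_mon (k r : nat) : mon := (0, ((r.-1 %/ gk k r)%N)%:R).
Definition t_pow (k r : nat) (x : rat) : mon := (0, x * (t_mon k r).2).
Definition q_pow (k r : nat) (z : int) : mon :=
  (z, - z%:~R * ((k.+1 %/ gk k r)%N)%:R).
Definition u_x (k r n : nat) (l : wt n) (j : 'I_n) : mon :=
  mon_mul (t_pow k r (- rho l j)) (q_pow k r (- l j)).
Definition u_ratio (k r n : nat) (l : wt n) (i : nat) : mon :=
  if insub i is Some ii then
    if insub i.+1 is Some jj then mon_mul (u_x k r l ii) (mon_inv (u_x k r l jj))
    else (0, 0)
  else (0, 0).

Definition inter_step (k r n : nat) (l m : wt n) : Prop :=
  m = omega l \/
  exists i : nat, [/\ (i.+1 < n)%N, m = sw i l, sw i l != l &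
     ~~ [|| mon_eq r (u_ratio k r l i) (0, 0),
            mon_eq r (u_ratio k r l i) (t_mon k r) |
            mon_eq r (u_ratio k r l i) (mon_inv (t_mon k r))]].

Definition intertwined (k r n : nat) : relation (wt n) :=
  clos_refl_sym_trans (wt n) (@inter_step k r n).

Definition neighborhood (n : nat) (a b : nat) (l : wt n) (i j : 'I_n) : Prop :=
  rho l i - rho l j = (a.-1)%:R /\
  ((l i - l j <= (b.-1)%:Z) \/ (l i - l j = b%:Z /\ (j < i)%N)).

Definition inB (k r n : nat) (l : wt n) : Prop :=
  forall i j : 'I_n, ~ neighborhood k.+1 r.-1 l i j.

(* l' is an enlargement of l; i_a is the index with rho_{i_a} = (n+1)/2 - a *)
Definition enlargement (k r n : nat) (l l' : wt n) : Prop :=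
  (forall i, rho l' i = rho l i) /\
  forall (a : nat) (i j : 'I_n), (1 <= a)%N -> (a <= n.-1)%N ->
    rho l i = (n.+1)%:R / 2%:R - a%:R ->
    rho l j = (n.+1)%:R / 2%:R - (a.+1)%:R ->
    Num.max (((n %/ k.+1)%N * r.-1)%N)%:Z (l i - l j) < l' i - l' j.

(* Main.v *)
Require Import Defs.
From mathcomp Require Import all_boot all_order all_algebra all_fingroup.
From mathcomp Require Import zify ring lra.
From Stdlib Require Import Relations.Relation_Definitions Relations.Relation_Operators.
Set Implicit Arguments. Unset Strict Implicit. Unset Printing Implicit Defensive.
Import Order.TTheory GRing.Theory Num.Theory.
Local Open Scope ring_scope.

Lemma lex_lt (n : nat) (C X Y : int) : (0 < n)%N -> - (n%:Z) < Y -> Y < n%:Z ->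
  (n%:Z * C < n%:Z * X + Y) = (C < X) || ((X == C) && (0 < Y)).
Proof.
move=> n0 h1 h2.
case: (ltrgtP C X) => hCX /=.
- have: n%:Z * (C + 1) <= n%:Z * X by rewrite ler_pM2l ?ltz_nat //; lia.
  lia.
- have: n%:Z * (X + 1) <= n%:Z * C by rewrite ler_pM2l ?ltz_nat //; lia.
  lia.
- subst X; lia.
Qed.

Definition v (n : nat) (l : wt n) (i : 'I_n) : int := n%:Z * l i - (i : nat)%:Z.

Lemma ord_gt0 n (i : 'I_n) : (0 < n)%N.
Proof. by apply: leq_ltn_trans (ltn_ord i). Qed.

Lemma vlt n (l : wt n) a b :
  (v l a < v l b) = (l a < l b) || ((l a == l b) && (b < a)%N).
Proof.
have n0 := ord_gt0 a.
have ha := ltn_ord a; have hb := ltn_ord b.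
have -> : (v l a < v l b) = (n%:Z * 0 < n%:Z * (l b - l a) + ((a:nat)%:Z - (b:nat)%:Z)).
  rewrite /v mulr0; apply/idP/idP; lia.
rewrite lex_lt //; try lia.
Qed.

Lemma vinj n (l : wt n) a b : v l a = v l b -> a = b.
Proof.
move=> h; apply/val_inj/eqP; apply: contraT => hne.
have h1 := vlt l a b; have h2 := vlt l b a.
rewrite h ltxx in h1 h2.
move: h1 h2; case: (ltrgtP (l a) (l b)) => //= e; move=> /esym/negbT h3 /esym/negbT h4; have : (a:nat) <> b by move=> E; move: hne; rewrite /= E eqxx. lia.
Qed.

Lemma pos_v n (l : wt n) i : pos l i = #|[set j | v l i < v l j]|.
Proof.
rewrite /pos; apply: eq_card => j; rewrite !inE vlt (eq_sym (l j)) //.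
Qed.

Lemma pos_lt n (l : wt n) i : (pos l i < n)%N.
Proof.
rewrite pos_v -[X in (_ < X)%N]card_ord; apply: proper_card; apply/properP; split.
  by apply/subsetP.
by exists i; rewrite ?inE ?ltxx.
Qed.

Definition posO n (l : wt n) i : 'I_n := Ordinal (pos_lt l i).

Lemma pos_vlt n (l : wt n) a b : v l a < v l b -> (pos l b < pos l a)%N.
Proof.
move=> hab; rewrite !pos_v; apply: proper_card; apply/properP; split.
  by apply/subsetP => j; rewrite !inE => /(lt_trans hab).
by exists b; rewrite ?inE ?ltxx.
Qed.

Lemma pos_le_v n (l : wt n) a b : (pos l a <= pos l b)%N -> v l b <= v l a.
Proof.
move=> h; rewrite leNgt; apply/negP => /pos_vlt; lia.
Qed.

Lemma pos_inj n (l : wt n) : injective (posO l).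
Proof.
move=> a b /(congr1 val) /= h; apply: (vinj (l := l)).
by apply/eqP; rewrite eq_le !pos_le_v ?h.
Qed.

Lemma pos_surj n (l : wt n) (p : nat) : (p < n)%N -> exists z, pos l z = p.
Proof.
move=> hp; have [g _ hg] := injF_bij (@pos_inj n l).
exists (g (Ordinal hp)); by have /(congr1 val) := hg (Ordinal hp).
Qed.

Lemma pos_relabel n (l l' : wt n) (s : 'I_n -> 'I_n) : injective s ->
  (forall a b, (v l' a < v l' b) = (v l (s a) < v l (s b))) ->
  forall a, pos l' a = pos l (s a).
Proof.
move=> si h a; rewrite !pos_v; symmetry; rewrite -(card_preimset _ si); apply: eq_card => j.
by rewrite !inE h.
Qed.

Lemma at_E n (l : wt n) i (hi : (i < n)%N) : at_ l i = l (Ordinal hi).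
Proof. by rewrite /at_ insubT /=; congr (l _); apply: val_inj. Qed.

Definition rot n (j : 'I_n) : 'I_n := Ordinal (ltn_pmod j.+1 (ord_gt0 j)).

Lemma rotE n (j : 'I_n) : val (rot j) = if (j.+1 < n)%N then j.+1 else 0%N.
Proof.
rewrite /= ; case: ifP => h; first by rewrite modn_small.
have -> : j.+1 = n by have := ltn_ord j; lia.
by rewrite modnn.
Qed.

Lemma omegaE n (l : wt n) j :
  omega l j = l (rot j) + (if (j.+1 < n)%N then 0 else 1).
Proof.
rewrite /omega ffunE; case: ifP => h.
  by rewrite (at_E _ h) addr0; congr (l _); apply: val_inj; rewrite rotE h.
rewrite (at_E _ (ord_gt0 j)); congr (l _ + _); apply: val_inj; by rewrite rotE h.
Qed.

Lemma v_omega n (l : wt n) j : v (omega l) j = v l (rot j) + 1.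
Proof.
rewrite /v omegaE; have := rotE j; case: ifP => h ->.
  by rewrite addr0; lia.
have hn : j.+1 = n by have := ltn_ord j; lia.
rewrite mulrDr mulr1; lia.
Qed.

Lemma rot_inj n : injective (@rot n).
Proof.
move=> a b /(congr1 val); rewrite !rotE => h; apply: ord_inj.
have := ltn_ord a; have := ltn_ord b; move: h; do 2 case: ifP; lia.
Qed.

Lemma pos_omega n (l : wt n) a : pos (omega l) a = pos l (rot a).
Proof.
apply: pos_relabel; first exact: rot_inj.
by move=> x y; rewrite !v_omega ltrD2r.
Qed.

Definition Bv (k r n : nat) (l : wt n) := forall a b : 'I_n,
  pos l b = (pos l a + k)%N -> ((n * r.-1)%N)%:Z < v l a - v l b.

Lemma Bv_omega k r n (l : wt n) : Bv k r l -> Bv k r (omega l).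
Proof.
move=> h a b; rewrite !pos_omega !v_omega => /h; lia.
Qed.

Definition i0 n i (hi : (i.+1 < n)%N) : 'I_n := Ordinal (ltnW hi).
Definition i1 n i (hi : (i.+1 < n)%N) : 'I_n := Ordinal hi.

Lemma swE n i (hi : (i.+1 < n)%N) (l : wt n) j :
  sw i l j = l (tperm (i0 hi) (i1 hi) j).
Proof.
rewrite /sw ffunE; case: (tpermP (i0 hi) (i1 hi) j) => [->|->|h0 h1] /=.
- by rewrite eqxx (at_E _ hi).
- have -> : (i.+1 == i) = false by lia.
  by rewrite eqxx (at_E _ (ltnW hi)).
- have -> : (j == i :> nat) = false.
    by apply/negP => /eqP e; apply: h0; apply: ord_inj.
  have -> : (j == i.+1 :> nat) = false.
    by apply/negP => /eqP e; apply: h1; apply: ord_inj.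
  by [].
Qed.

Lemma tperm_ord n i (hi : (i.+1 < n)%N) (a b : 'I_n) :
  ~ (a = i0 hi /\ b = i1 hi) -> ~ (a = i1 hi /\ b = i0 hi) ->
  (tperm (i0 hi) (i1 hi) a < tperm (i0 hi) (i1 hi) b)%N = (a < b)%N.
Proof.
move=> h1 h2.
have ea : forall x : 'I_n, x = i0 hi <-> (x : nat) = i.
  by move=> x; split => [->//|e]; apply: ord_inj.
have eb : forall x : 'I_n, x = i1 hi <-> (x : nat) = i.+1.
  by move=> x; split => [->//|e]; apply: ord_inj.
move: h1 h2; rewrite !ea !eb.
case: (tpermP (i0 hi) (i1 hi) a) => [|| ]; rewrite ?ea ?eb /=;
case: (tpermP (i0 hi) (i1 hi) b) => [|| ]; rewrite ?ea ?eb /=; lia.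
Qed.

Lemma dec_pair (T : eqType) (x y c d : T) : (x = c /\ y = d) \/ ~ (x = c /\ y = d).
Proof.
case: (eqVneq x c) => [->|h]; last by right; case=> e; rewrite e eqxx in h.
case: (eqVneq y d) => [->|h]; [by left| by right; case=> _ e; rewrite e eqxx in h].
Qed.

Lemma v_sw_lt n i (hi : (i.+1 < n)%N) (l : wt n) a b :
  l (i0 hi) != l (i1 hi) ->
  (v (sw i l) a < v (sw i l) b) =
  (v l (tperm (i0 hi) (i1 hi) a) < v l (tperm (i0 hi) (i1 hi) b)).
Proof.
move=> hne; rewrite !vlt !swE.
case: (boolP (l (tperm (i0 hi) (i1 hi) a) == l (tperm (i0 hi) (i1 hi) b))) => e;
  last by rewrite !andFb.
rewrite !andTb.
have [[ha hb]|nh1] := dec_pair a b (i0 hi) (i1 hi).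
  by move: e; rewrite ha hb tpermL tpermR eq_sym (negbTE hne).
have [[ha hb]|nh2] := dec_pair a b (i1 hi) (i0 hi).
  by move: e; rewrite ha hb tpermL tpermR (negbTE hne).
by rewrite tperm_ord // => -[? ?]; [apply: nh2 | apply: nh1].
Qed.

Lemma pos_sw n i (hi : (i.+1 < n)%N) (l : wt n) a :
  l (i0 hi) != l (i1 hi) ->
  pos (sw i l) a = pos l (tperm (i0 hi) (i1 hi) a).
Proof.
move=> hne; apply: pos_relabel; first exact: perm_inj.
by move=> x y; rewrite v_sw_lt.
Qed.

Lemma vdiff n (l : wt n) a b : v l a - v l b = n%:Z * (l a - l b) + ((b:nat)%:Z - (a:nat)%:Z).
Proof. rewrite /v mulrBr; lia. Qed.

Lemma Bv_sw k r n i (hi : (i.+1 < n)%N) (l : wt n) :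
  l (i0 hi) < l (i1 hi) -> Bv k r l -> Bv k r (sw i l).
Proof.
move=> asc hB a b; have hne : l (i0 hi) != l (i1 hi) by rewrite lt_eqF.
rewrite !pos_sw // => /hB.
have n0 := ord_gt0 a; have ha := ltn_ord a; have hb := ltn_ord b.
have ha' := ltn_ord (tperm (i0 hi) (i1 hi) a); have hb' := ltn_ord (tperm (i0 hi) (i1 hi) b).
rewrite !vdiff !swE PoszM.
rewrite !lex_lt; try lia.
case/orP => [->//|/andP[/eqP e hY]]; apply/orP; right; rewrite e eqxx /=.
have [[ha1 hb1]|nh1] := dec_pair a b (i0 hi) (i1 hi).
  by rewrite ha1 hb1 /=; lia.
have [[ha1 hb1]|nh2] := dec_pair a b (i1 hi) (i0 hi).
  by move: e; rewrite ha1 hb1 tpermL tpermR; move: asc; lia.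
have h : (tperm (i0 hi) (i1 hi) a < tperm (i0 hi) (i1 hi) b)%N by lia.
rewrite tperm_ord in h; [lia|exact: nh1|exact: nh2].
Qed.

Definition inv n (l : wt n) : nat :=
  #|[set p : 'I_n * 'I_n | (p.1 < p.2)%N && (l p.1 < l p.2)]|.

Lemma inv_sw n i (hi : (i.+1 < n)%N) (l : wt n) :
  l (i0 hi) < l (i1 hi) -> (inv (sw i l) < inv l)%N.
Proof.
move=> asc.
set t := tperm (i0 hi) (i1 hi).
pose f (p : 'I_n * 'I_n) := (t p.1, t p.2).
have finj : injective f.
  by move=> [a b] [c d] [/perm_inj -> /perm_inj ->].
set A := [set p : 'I_n * 'I_n | (p.1 < p.2)%N && (l p.1 < l p.2)].
rewrite /inv -/A -(card_imset _ finj) [#|A|](cardsD1 (i0 hi, i1 hi)).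
rewrite (_ : (i0 hi, i1 hi) \in A = true); last by rewrite inE /= ltnSn asc.
rewrite add1n ltnS; apply: subset_leq_card; apply/subsetP => q /imsetP [[a b]].
rewrite inE /= !swE => /andP [hab hl] ->.
have nh2 : ~ (a = i1 hi /\ b = i0 hi) by case=> ea eb; move: hab; rewrite ea eb /=; lia.
have [[ha hb]|nh1] := dec_pair a b (i0 hi) (i1 hi).
  by move: hl; rewrite ha hb /t tpermL tpermR; move: asc; lia.
rewrite !inE /f /= tperm_ord // hab hl andbT.
rewrite andbT; apply/negP => /eqP e; case: e => e1 e2; apply: nh2.
split; apply: (@perm_inj _ t); rewrite /t ?e1 ?e2 ?tpermL ?tpermR //.
Qed.

Lemma chainV k r n (l : wt n) : Bv k r l -> forall M x y,
  (pos l x + M * k <= pos l y)%N -> ((n * M * r.-1)%N)%:Z <= v l x - v l y.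
Proof.
move=> hB M; elim: M => [|M IH] x y.
  rewrite muln0 mul0n addn0 => /pos_le_v; lia.
move=> h.
have hy := pos_lt l y.
have [z hz] : exists z, pos l z = (pos l x + k)%N.
  by apply: pos_surj; rewrite mulSn in h; lia.
have h1 := hB x z hz.
have h2 : (pos l z + M * k <= pos l y)%N by rewrite hz; rewrite mulSn in h; lia.
have := IH z y h2.
have -> : (n * M.+1 * r.-1 = n * M * r.-1 + n * r.-1)%N by rewrite mulnSr mulnDl.
move: h1; set P := (n * M * r.-1)%N; set Q := (n * r.-1)%N; lia.
Qed.

Lemma insub_ord n j (hj : (j < n)%N) : insub j = Some (Ordinal hj) :> option 'I_n.
Proof. by rewrite insubT; congr Some; apply: ord_inj. Qed.

Definition Tq (k r : nat) : rat := ((r.-1 %/ gk k r)%N)%:R.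
Definition Qq (k r : nat) : rat := ((k.+1 %/ gk k r)%N)%:R.

Lemma u_ratioE k r n i (hi : (i.+1 < n)%N) (l : wt n) :
  u_ratio k r l i = (l (i1 hi) - l (i0 hi),
    ((pos l (i0 hi))%:R - (pos l (i1 hi))%:R) * Tq k r
    - (l (i1 hi) - l (i0 hi))%:~R * Qq k r).
Proof.
rewrite /u_ratio (insub_ord (ltnW hi)) (insub_ord hi).
rewrite /mon_mul /mon_inv /u_x /mon_mul /t_pow /q_pow /rho /t_mon /=.
rewrite -/(Tq k r) -/(Qq k r) -/(i0 hi) -/(i1 hi).
congr (_, _); first by lia.
rewrite !rmorphN /= !rmorphB /=. ring.
Qed.

Lemma TQ k r : (r.-1)%:R * Qq k r = (k.+1)%:R * Tq k r.
Proof.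
rewrite /Qq /Tq -!natrM; congr _%:R.
by rewrite /gk !muln_divA ?dvdn_gcdl ?dvdn_gcdr // mulnC.
Qed.

Lemma Tq_neq0 k r : (2 <= r)%N -> Tq k r != 0.
Proof.
move=> hr; rewrite /Tq pnatr_eq0 -lt0n divn_gt0 ?gcdn_gt0; last by apply/orP; right; lia.
by apply: dvdn_leq; [lia | apply: dvdn_gcdr].
Qed.

Lemma ez0 (x : int) : x - 0%Z = x. Proof. lia. Qed.
Lemma ez1 (x : int) : x - - 0 = x. Proof. lia. Qed.

Lemma nonblock k r n i (hi : (i.+1 < n)%N) (l : wt n) :
  (1 <= k)%N -> (2 <= r)%N -> Bv k r l -> l (i0 hi) < l (i1 hi) ->
  ~~ [|| mon_eq r (u_ratio k r l i) (0, 0), mon_eq r (u_ratio k r l i) (t_mon k r)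
       | mon_eq r (u_ratio k r l i) (mon_inv (t_mon k r))].
Proof.
move=> hk hr hB asc.
set L := l (i1 hi) - l (i0 hi).
have hvl : v l (i0 hi) < v l (i1 hi) by rewrite vlt asc.
have hp := pos_vlt hvl.
set d := (pos l (i0 hi) - pos l (i1 hi))%N.
have hd : ((pos l (i0 hi))%:R - (pos l (i1 hi))%:R : rat) = d%:R.
  by rewrite /d natrB // ltnW.
suff H : forall c : int, (c == 0) || (c == 1) || (c == -1) ->
   ~ ((r.-1 %| L)%Z /\ d%:R * Tq k r - L%:~R * Qq k r = c%:~R * Tq k r).
  rewrite /mon_eq u_ratioE -/L hd /t_mon /mon_inv /= -/(Tq k r).
  rewrite ?ez0 ?ez1.
  apply/negP => /or3P [] /andP [/eqP /dvdz_mod0P h1 /eqP h2].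
  - by apply: (H 0) => //; split => //; rewrite h2; ring.
  - by apply: (H 1) => //; split => //; rewrite h2; ring.
  - by apply: (H (-1)) => //; split => //; rewrite h2; ring.
move=> c hc [/dvdzP [M hM] heq].
have e1 : ((d%:Z - M * (k.+1)%:Z - c)%:~R : rat) * Tq k r = 0.
  transitivity (d%:R * Tq k r - (M%:~R * ((r.-1)%:R * Qq k r)) - c%:~R * Tq k r).
    rewrite TQ; ring.
  rewrite -heq hM; ring.
move: e1 => /eqP; rewrite mulf_eq0 (negbTE (Tq_neq0 k hr)) orbF intr_eq0 => /eqP e2.
have hL : 0 < L by rewrite /L subr_gt0.
have hM0 : 0 < M.
  by move: hL; rewrite hM pmulr_lgt0 //; lia.
case: M hM hM0 e2 => // m hM _ e2.
have hch : (pos l (i1 hi) + m * k <= pos l (i0 hi))%N.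
  move: hc e2; rewrite /d; lia.
have := chainV hB hch.
rewrite vdiff /= -/L hM -!PoszM mulnA; lia.
Qed.

Lemma step_omega k r n (l : wt n) : intertwined k r l (omega l).
Proof. by apply: rst_step; left. Qed.

Lemma step_sw k r n i (hi : (i.+1 < n)%N) (l : wt n) :
  (1 <= k)%N -> (2 <= r)%N -> Bv k r l -> l (i0 hi) < l (i1 hi) ->
  intertwined k r l (sw i l).
Proof.
move=> hk hr hB asc; apply: rst_step; right; exists i; split => //.
  apply/negP => /eqP e; have := congr1 (fun f : wt n => f (i0 hi)) e.
  by rewrite /= swE tpermL => e'; move: asc; rewrite e' ltxx.
exact: nonblock.
Qed.

Definition dom n (l : wt n) := forall a b : 'I_n, (a <= b)%N -> l b <= l a.

Lemma adj_glob n (g : 'I_n -> int) :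
  (forall a b : 'I_n, (b : nat) = a.+1 -> g b <= g a) ->
  forall a b : 'I_n, (a <= b)%N -> g b <= g a.
Proof.
move=> h.
suff H : forall m (a b : 'I_n), (b : nat) = (a + m)%N -> g b <= g a.
  by move=> a b hab; apply: (H (b - a)%N); lia.
elim=> [|m IH] a b hb.
  by rewrite addn0 in hb; rewrite (ord_inj hb).
have hc : (a + m < n)%N by have := ltn_ord b; lia.
apply: le_trans (IH a (Ordinal hc) erefl).
by apply: h => /=; lia.
Qed.

Lemma card_lt n (a : 'I_n) : #|[set j : 'I_n | (j < a)%N]| = a.
Proof.
have ha : (a <= n)%N by apply: ltnW.
have winj : injective (widen_ord ha) by move=> x y /(congr1 val) /= ?; apply: ord_inj.
rewrite -[X in _ = X]card_ord -(card_imset _ winj).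
apply: eq_card => j; rewrite inE; apply/idP/imsetP.
  by move=> hj; exists (Ordinal hj) => //; apply: ord_inj.
by case=> x _ ->; rewrite /= ltn_ord.
Qed.

Lemma pos_dom n (l : wt n) a : dom l -> pos l a = a.
Proof.
move=> hd; rewrite pos_v -[X in _ = X]card_lt; apply: eq_card => j; rewrite !inE.
rewrite vlt; case: (ltngtP j a) => h /=.
- by move: (hd j a (ltnW h)); lia.
- by move: (hd a j (ltnW h)); lia.
- by rewrite (ord_inj h) ltxx eqxx.
Qed.

Lemma sortS k r n : (1 <= k)%N -> (2 <= r)%N -> forall (l : wt n), Bv k r l ->
  exists d, [/\ dom d, Bv k r d, intertwined k r l d & forall j, d (posO l j) = l j].
Proof.
move=> hk hr.
suff H : forall N (l : wt n), (inv l < N)%N -> Bv k r l ->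
  exists d, [/\ dom d, Bv k r d, intertwined k r l d & forall j, d (posO l j) = l j].
  by move=> l; apply: (H (inv l).+1).
elim=> [//|N IH] l hinv hB.
case: (boolP [exists a : 'I_n, [exists b : 'I_n, (val b == a.+1) && (l a < l b)]]).
  case/existsP => a /existsP [b /andP [/eqP hb hab]].
  have hi : (a.+1 < n)%N by rewrite -hb ltn_ord.
  have e0 : i0 hi = a by apply: ord_inj.
  have e1 : i1 hi = b by apply: ord_inj.
  have asc : l (i0 hi) < l (i1 hi) by rewrite e0 e1.
  have hne : l (i0 hi) != l (i1 hi) by rewrite lt_eqF.
  have := inv_sw asc => hlt.
  have [d [dd Bd id hd]] := IH (sw a l) (leq_trans hlt hinv) (Bv_sw asc hB).
  exists d; split => //.
    by apply: rst_trans id; apply: step_sw.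
  move=> j; have := hd (tperm (i0 hi) (i1 hi) j).
  rewrite swE tpermK => <-; congr (d _); apply: ord_inj => /=.
  by rewrite pos_sw // tpermK.
move=> hna.
have hd : dom l.
  apply: adj_glob => a b hb; rewrite leNgt; apply/negP => hab; move/negP: hna; apply.
  by apply/existsP; exists a; apply/existsP; exists b; apply/andP; split; [apply/eqP; exact: hb|].
exists l; split => //; first exact: rst_refl.
by move=> j; congr (l _); apply: ord_inj => /=; rewrite pos_dom.
Qed.

Lemma rearr k r n (c d : wt n) : (1 <= k)%N -> (2 <= r)%N -> Bv k r c -> dom d ->
  (forall j, d (posO c j) = c j) -> intertwined k r c d.
Proof.
move=> hk hr hB hd hc.
have [d' [dd' _ id' hd']] := sortS hk hr hB.
suff -> : d = d' by [].
apply/ffunP => x; have [j hj] := pos_surj c (ltn_ord x).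
have -> : x = posO c j by apply: ord_inj.
by rewrite hc hd'.
Qed.

Definition dinc n (l : wt n) (m : nat) : wt n := [ffun x => l x + ((x < m)%N : nat)%:Z].

Lemma inc_iter k r n (l : wt n) : (1 <= k)%N -> (2 <= r)%N -> dom l -> Bv k r l ->
  forall m, (m <= n)%N ->
  [/\ intertwined k r l (iter m (@omega n) l), Bv k r (iter m (@omega n) l),
      forall j, pos (iter m (@omega n) l) j = ((j + m) %% n)%N &
      forall j, dinc l m (posO (iter m (@omega n) l) j) = iter m (@omega n) l j].
Proof.
move=> hk hr hd hB; elim=> [|m IH] hm /=.
  split => //; first exact: rst_refl.
    by move=> j; rewrite pos_dom // addn0 modn_small.
  move=> j; rewrite ffunE /=.
  have -> : posO l j = j by apply: ord_inj; rewrite /= pos_dom.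
  by rewrite addr0.
have [i1' B1 P1 D1] := IH (ltnW hm).
set c := iter m (@omega n) l in i1' B1 P1 D1 *.
split.
- by apply: rst_trans i1' _; apply: step_omega.
- exact: Bv_omega.
- move=> j; rewrite pos_omega P1 rotE; have := ltn_ord j; case: ifP => h hj; [by rewrite addSnnS | by rewrite (_ : (j + m.+1 = n + m)%N) ?modnDl //; lia].
- move=> j; rewrite omegaE -D1 !ffunE.
  have -> : posO (omega c) j = posO c (rot j) by apply: ord_inj; rewrite /= pos_omega.
  rewrite /= P1 rotE; have := ltn_ord j; case: ifP => h hj.
  + rewrite addr0; congr (_ + Posz (nat_of_bool _)).
    case: (ltnP (j.+1 + m) n) => h2.
      by rewrite modn_small //; apply/idP/idP; lia.
    rewrite -{1 2}(subnK h2) modnDr modn_small; last by lia.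
    by apply/idP/idP; lia.
  + rewrite add0n modn_small ?ltnSn ?ltnn; last by lia.
    by rewrite -addrA.
Qed.

Lemma dom_dinc n (l : wt n) m : dom l -> dom (dinc l m).
Proof.
move=> hd a b hab; rewrite !ffunE; have := hd a b hab.
case: (ltnP b m); case: (ltnP a m) => /= ? ?; lia.
Qed.

Lemma Inc k r n (l : wt n) m : (1 <= k)%N -> (2 <= r)%N -> dom l -> Bv k r l ->
  (m <= n)%N -> intertwined k r l (dinc l m).
Proof.
move=> hk hr hd hB hm.
have [i1' B1 _ D1] := inc_iter hk hr hd hB hm.
apply: rst_trans i1' _; apply: rearr => //; exact: dom_dinc.
Qed.

Lemma Bv_mono k r n (l l' : wt n) : dom l -> dom l' ->
  (forall a b : 'I_n, (a <= b)%N -> l a - l b <= l' a - l' b) -> Bv k r l -> Bv k r l'.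
Proof.
move=> hd hd' hg hB a b; rewrite !pos_dom // => e.
have := hB a b; rewrite !pos_dom // => /(_ e).
rewrite !vdiff.
have : n%:Z * (l a - l b) <= n%:Z * (l' a - l' b).
  by rewrite ler_pM2l ?ltz_nat ?(ord_gt0 a) //; apply: hg; lia.
lia.
Qed.

Lemma shiftI k r n (l : wt n) : (1 <= k)%N -> (2 <= r)%N -> dom l -> Bv k r l ->
  forall c : nat, intertwined k r l [ffun x => l x + c%:Z].
Proof.
move=> hk hr hd hB; elim=> [|c IH].
  have -> : [ffun x => l x + 0%:Z] = l by apply/ffunP => x; rewrite ffunE addr0.
  exact: rst_refl.
set lc := [ffun x => l x + c%:Z] in IH *.
have dc : dom lc by move=> a b hab; rewrite !ffunE lerD2r; apply: hd.
have Bc : Bv k r lc by apply: (Bv_mono hd dc) => // a b _; rewrite !ffunE; lia.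
apply: rst_trans IH _.
have -> : [ffun x => l x + c.+1%:Z] = dinc lc n.
  by apply/ffunP => x; rewrite !ffunE ltn_ord; lia.
by apply: Inc => //.
Qed.

Lemma Th_dom k r n (z0 zl : 'I_n) : (1 <= k)%N -> (2 <= r)%N ->
  (z0 : nat) = 0%N -> (zl : nat) = n.-1 ->
  forall (mu : nat) (l l' : wt n), dom l -> dom l' -> Bv k r l ->
  (forall a b : 'I_n, (a <= b)%N -> l' b - l b <= l' a - l a) ->
  (l' z0 - l z0) - (l' zl - l zl) = mu%:Z -> intertwined k r l l'.
Proof.
move=> hk hr ez0 ezl; elim=> [|mu IH] l l' hd hd' hB hf hmu.
  have hc : forall x, l' x - l x = l' zl - l zl.
    move=> x; have h1 := hf z0 x; have h2 := hf x zl.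
    rewrite ez0 ezl in h1 h2; have := ltn_ord x; lia.
  have [c {}hc] : exists c : int, forall x, l' x - l x = c by exists (l' zl - l zl).
  case: (lerP 0 c) => hc0.
    have [c' ec'] : exists c' : nat, c = c'%:Z by exists (absz c); lia.
    have -> : l' = [ffun x => l x + c'%:Z].
      by apply/ffunP => x; rewrite ffunE -ec' -(hc x); ring.
    exact: shiftI.
  have [c' ec'] : exists c' : nat, c = - c'%:Z by exists (absz c); lia.
  have hB' : Bv k r l' by apply: (Bv_mono hd hd') => // a b _; have := hc a; have := hc b; lia.
  apply: rst_sym.
  have -> : l = [ffun x => l' x + c'%:Z].
    apply/ffunP => x; rewrite ffunE; transitivity (l' x - (l' x - l x)); first by ring.
    by rewrite hc ec' opprK.
  exact: shiftI.
case: (boolP [exists a : 'I_n, [exists b : 'I_n,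
          (val b == a.+1) && (l' b - l b < l' a - l a)]]); last first.
  move=> hna.
  have hg : forall a b : 'I_n, (a <= b)%N -> - (l' b - l b) <= - (l' a - l a).
    apply: adj_glob => a b hb; rewrite lerN2 leNgt; apply/negP => hab; move/negP: hna; apply.
    by apply/existsP; exists a; apply/existsP; exists b; apply/andP; split; [apply/eqP; exact: hb|].
  have := hg z0 zl; rewrite ez0 ezl => /(_ isT).
  have := hf z0 zl; rewrite ez0 ezl => /(_ isT).
  move: hmu; lia.
case/existsP => a /existsP [b /andP [/eqP hb0 hab]].
have hb : (b : nat) = a.+1 := hb0.
have hm : (a.+1 <= n)%N by have := ltn_ord b; lia.
set l1 := dinc l a.+1.
have d1 : dom l1 by apply: dom_dinc.
have g1 : forall a' b' : 'I_n, (a' <= b')%N -> l a' - l b' <= l1 a' - l1 b'.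
  move=> a' b' h; rewrite !ffunE.
  case: (ltnP a' a.+1); case: (ltnP b' a.+1) => /= ? ?; lia.
apply: rst_trans (Inc hk hr hd hB hm) _.
apply: (IH l1 l') => //.
- exact: (Bv_mono hd d1 g1).
- move=> a' b' h; rewrite !ffunE.
  have h1 := hf a' b' h.
  case: (ltnP a' a.+1); case: (ltnP b' a.+1) => /= h2 h3; try lia.
  have h4 : l' b' - l b' <= l' b - l b by apply: hf; lia.
  have h5 : l' a - l a <= l' a' - l a' by apply: hf; lia.
  lia.
- rewrite !ffunE ez0 ezl /=.
  have := ltn_ord b; rewrite hb => hbn.
  have -> : (n.-1 < a.+1)%N = false by lia.
  rewrite /= addr0; move: hmu; lia.
Qed.

Lemma rho_diff n (l : wt n) a b : rho l a - rho l b = (pos l b)%:R - (pos l a)%:R.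
Proof. rewrite /rho; ring. Qed.

Lemma inB_Bv k r n (l : wt n) : (1 <= k)%N -> (2 <= r)%N -> inB k r l -> Bv k r l.
Proof.
move=> hk hr hB a b e.
have hn := hB a b; rewrite /neighborhood rho_diff e natrD addrAC subrr add0r /= in hn.
have n0 := ord_gt0 a; have ha := ltn_ord a; have hb := ltn_ord b.
rewrite vdiff PoszM lex_lt //; try lia.
have hab : (a : nat) <> b by move=> eab; move: e; rewrite (ord_inj eab); lia.
have hne : ~ (l a - l b <= (r.-1.-1)%:Z \/ l a - l b = (r.-1)%:Z /\ (b < a)%N) by tauto.
apply/orP; case: (ltrgtP ((r.-1)%:Z) (l a - l b)) => h; [by left| |].
  by exfalso; apply: hne; left; lia.
right => /=.
have : ~~ (b < a)%N by apply/negP => hba; apply: hne; right.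
lia.
Qed.

Lemma pos_eq_rho n (l l' : wt n) a : rho l' a = rho l a -> pos l' a = pos l a.
Proof.
rewrite /rho => /eqP; rewrite (inj_eq (addrI _)) eqr_opp eqr_nat => /eqP //.
Qed.

Lemma gap1 k r n (l l' : wt n) : enlargement k r l l' ->
  forall x y, pos l y = (pos l x).+1 -> l x - l y < l' x - l' y.
Proof.
move=> [hr hg] x y e.
have hy := pos_lt l y.
have h1 : ((pos l x).+1 <= n.-1)%N by lia.
have h2 : rho l x = (n.+1)%:R / 2%:R - ((pos l x).+1)%:R.
  by rewrite /rho -!natr1; field.
have h3 : rho l y = (n.+1)%:R / 2%:R - ((pos l x).+2)%:R.
  by rewrite /rho e -!natr1; field.
by have := hg _ x y (ltn0Sn _) h1 h2 h3; rewrite gt_max => /andP [].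
Qed.

Lemma tele k r n (l l' : wt n) : enlargement k r l l' ->
  forall m x y, pos l y = (pos l x + m)%N -> l x - l y + m%:Z <= l' x - l' y.
Proof.
move=> hE; elim=> [|m IH] x y e.
  rewrite addn0 in e.
  have -> : y = x by apply: (@pos_inj n l); apply: ord_inj.
  by rewrite !subrr.
have hy := pos_lt l y.
have hz0 : (pos l x + m < n)%N by lia.
have [z hz] := pos_surj l hz0.
have h1 := IH x z hz.
have h2 : l z - l y < l' z - l' y by apply: (gap1 hE); rewrite hz e addnS.
move: h1 h2; lia.
Qed.

Theorem lemma4p4 (n k r : nat) (hk1 : (1 <= k)%N) (hkn : (k <= n.-1)%N)
  (hr : (2 <= r)%N) (l l' : wt n) :
  inB k r l -> enlargement k r l l' -> intertwined k r l' l.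
Proof.
move=> hB hE.
have hBv := inB_Bv hk1 hr hB.
have hpos : forall i, pos l' i = pos l i by move=> i; apply: pos_eq_rho; case: hE.
have hBv' : Bv k r l'.
  move=> a b; rewrite !hpos => e.
  have := hBv a b e; rewrite !vdiff.
  have := tele hE e; move=> h.
  have : n%:Z * (l a - l b) <= n%:Z * (l' a - l' b).
    by rewrite ler_pM2l ?ltz_nat ?(ord_gt0 a) //; lia.
  lia.
have [d [dd Bd id hd]] := sortS hk1 hr hBv.
have [d' [dd' Bd' id' hd']] := sortS hk1 hr hBv'.
have n2 : (1 < n)%N by lia.
pose z0 : 'I_n := Ordinal (ltnW n2).
have hzl : (n.-1 < n)%N by lia.
pose zl : 'I_n := Ordinal hzl.
have rep : forall x : 'I_n, exists xi, [/\ d x = l xi, d' x = l' xi & pos l xi = x].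
  move=> x; have [xi hxi] := pos_surj l (ltn_ord x).
  exists xi; split => //.
    by rewrite -hd; congr (d _); apply: ord_inj.
  by rewrite -hd'; congr (d' _); apply: ord_inj; rewrite /= hpos.
have hf : forall a b : 'I_n, (a <= b)%N -> d' b - d b <= d' a - d a.
  move=> a b hab.
  have [xa [-> -> ea]] := rep a; have [xb [-> -> eb]] := rep b.
  have := tele hE (m := (b - a)%N) (x := xa) (y := xb); rewrite ea eb => /(_ _).
  by move=> h; have := h (esym (subnKC hab)); lia.
have hX : 0 <= (d' z0 - d z0) - (d' zl - d zl).
  by have := hf z0 zl (leq0n n.-1); lia.
have [mu hmu] : exists mu : nat, (d' z0 - d z0) - (d' zl - d zl) = mu%:Z.
  by exists (absz ((d' z0 - d z0) - (d' zl - d zl))%R); rewrite gez0_abs.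
have hdd := Th_dom (z0 := z0) (zl := zl) hk1 hr erefl erefl dd dd' Bd hf hmu.
apply: rst_trans id' _.
apply: rst_trans; first exact: rst_sym hdd.
exact: rst_sym.
Qed.
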